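(* Fix $p\in[1,\infty)$ and $r\in[0,\infty]$. For any metric spaces $X$ and $Y$, with $X\times Y$ carrying the maximum metric, there are homotopy equivalences $$\mathrm{VR}^m(X\times Y;r)\simeq \mathrm{VR}^m(X;r)\times \mathrm{VR}^m(Y;r),\qquad \check{C}^m(X\times Y;r)\simeq \check{C}^m(X;r)\times\check{C}^m(Y;r),$$ where the right-hand sides carry the maximum of the metrics of the two factors.
   Context: For a metric space $X$ and $r\in[0,\infty]$: the Vietoris–Rips complex $\mathrm{VR}(X;r)$ is the simplicial complex with vertex set $X$ whose simplices are the nonempty finite subsets of $X$ of diameter at most $r$; the Čech complex $\check{C}(X;r)$ is the simplicial complex with vertex set $X$ whose simplices are the nonempty finite subsets $\sigma\subseteq X$ with $\bigcap_{x\in\sigma}B_r(x)\neq\emptyset$, where $B_r(x)$ is the ball of radius $r$ about $x$ in $X$ (the statement holds with either open or closed balls, fixed throughout). For a simplicial complex $K$ with vertex set $X$, its metric thickening is the set of finitely supported probability measures $\mu=\sum_{i=1}^n\lambda_i\delta_{x_i}$ on $X$ (distinct $x_i$, $\lambda_i>0$, $\sum\lambda_i=1$) with $\{x_1,\dots,x_n\}\in K$, equipped with the $p$-Wasserstein metric $W_p(\mu,\nu)=\inf_\pi\left(\int_{X\times X}d(x,y)^p\,d\pi\right)^{1/p}$ (infimum over couplings $\pi$ of $\mu$ and $\nu$). $\mathrm{VR}^m(X;r)$ and $\check{C}^m(X;r)$ denote the metric thickenings of $\mathrm{VR}(X;r)$ and $\check{C}(X;r)$ respectively. *)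

(* Defs.v *)
From Stdlib Require Import Reals Lra List.
From Coquelicot Require Import Coquelicot.
Open Scope R_scope.

Definition is_metric {T : Type} (d : T -> T -> R) : Prop :=
  (forall x y, 0 <= d x y) /\
  (forall x y, d x y = 0 <-> x = y) /\
  (forall x y, d x y = d y x) /\
  (forall x y z, d x z <= d x y + d y z).

Definition max_dist {A B : Type} (dA : A -> A -> R) (dB : B -> B -> R)
  : A * B -> A * B -> R :=
  fun u v => Rmax (dA (fst u) (fst v)) (dB (snd u) (snd v)).

Definition dcontinuous {A B : Type} (dA : A -> A -> R) (dB : B -> B -> R)
  (f : A -> B) : Prop :=
  forall x eps, 0 < eps -> exists delta, 0 < delta /\
    forall y, dA x y < delta -> dB (f x) (f y) < eps.

(** H : [0,1] x A -> B, jointly continuous for the product topology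
    (i.e. for the max of |t - s| and dA). Values outside t in [0,1] are irrelevant. *)
Definition dhomotopy {A B : Type} (dA : A -> A -> R) (dB : B -> B -> R)
  (H : R -> A -> B) : Prop :=
  forall t x eps, 0 <= t <= 1 -> 0 < eps -> exists delta, 0 < delta /\
    forall s y, 0 <= s <= 1 -> Rabs (t - s) < delta -> dA x y < delta ->
      dB (H t x) (H s y) < eps.

Definition dhomotopic {A B : Type} (dA : A -> A -> R) (dB : B -> B -> R)
  (f g : A -> B) : Prop :=
  exists H : R -> A -> B, dhomotopy dA dB H /\
    (forall x, H 0 x = f x) /\ (forall x, H 1 x = g x).

Definition homotopy_equivalent {A B : Type} (dA : A -> A -> R) (dB : B -> B -> R)
  : Prop :=
  exists (f : A -> B) (g : B -> A),
    dcontinuous dA dB f /\ dcontinuous dB dA g /\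
    dhomotopic dA dA (fun x => g (f x)) (fun x => x) /\
    dhomotopic dB dB (fun y => f (g y)) (fun y => y).

(** * Simplicial complexes on vertex set T: predicates on (finite nonempty) subsets *)
Definition VR {T : Type} (d : T -> T -> R) (r : Rbar) (s : T -> Prop) : Prop :=
  forall x y, s x -> s y -> Rbar_le (Finite (d x y)) r.

Definition in_ball {T : Type} (closed : bool) (d : T -> T -> R) (r : Rbar)
  (x z : T) : Prop :=
  if closed then Rbar_le (Finite (d x z)) r else Rbar_lt (Finite (d x z)) r.

Definition Cech {T : Type} (closed : bool) (d : T -> T -> R) (r : Rbar)
  (s : T -> Prop) : Prop :=
  exists z, forall x, s x -> in_ball closed d r x z.

Definition sumR {A : Type} (f : A -> R) (l : list A) : R :=
  fold_right Rplus 0 (map f l).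

Definition fin_prob {T : Type} (mu : T -> R) : Prop :=
  (forall x, 0 <= mu x) /\
  exists l : list T, NoDup l /\ (forall x, mu x <> 0 -> In x l) /\ sumR mu l = 1.

Definition supp {T : Type} (mu : T -> R) : T -> Prop := fun x => 0 < mu x.

(** real powers with the convention 0 ^ q = 0 (used for q > 0 only) *)
Definition rpow (x q : R) : R := if Rle_dec x 0 then 0 else Rpower x q.

Definition coupling_cost {T : Type} (d : T -> T -> R) (p : R) (mu nu : T -> R)
  (c : R) : Prop :=
  exists (pi : T * T -> R) (l1 l2 : list T),
    NoDup l1 /\ NoDup l2 /\
    (forall a b, 0 <= pi (a, b)) /\
    (forall a b, pi (a, b) <> 0 -> In a l1 /\ In b l2) /\
    (forall a, mu a <> 0 -> In a l1) /\
    (forall b, nu b <> 0 -> In b l2) /\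
    (forall a, sumR (fun b => pi (a, b)) l2 = mu a) /\
    (forall b, sumR (fun a => pi (a, b)) l1 = nu b) /\
    c = sumR (fun a => sumR (fun b => pi (a, b) * rpow (d a b) p) l2) l1.

Definition Wp {T : Type} (d : T -> T -> R) (p : R) (mu nu : T -> R) : R :=
  rpow (real (Glb_Rbar (coupling_cost d p mu nu))) (/ p).

Definition Thick (T : Type) (K : (T -> Prop) -> Prop) : Type :=
  { mu : T -> R | fin_prob mu /\ K (supp mu) }.

Definition thick_dist {T : Type} (d : T -> T -> R) (p : R) (K : (T -> Prop) -> Prop)
  : Thick T K -> Thick T K -> R :=
  fun m n => Wp d p (proj1_sig m) (proj1_sig n).

(* Main.v *)
Require Import Defs.
From Stdlib Require Import Reals Lra List Permutation ClassicalEpsilon Classical FunctionalExtensionality ProofIrrelevance.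
From Coquelicot Require Import Coquelicot.
Open Scope R_scope.


Lemma sumR_cons {T} (f : T -> R) x l : sumR f (x :: l) = f x + sumR f l.
Proof. reflexivity. Qed.
Lemma sumR_nil {T} (f : T -> R) : sumR f nil = 0.
Proof. reflexivity. Qed.
Lemma sumR_app {T} (f : T -> R) l1 l2 : sumR f (l1 ++ l2) = sumR f l1 + sumR f l2.
Proof. induction l1; simpl. rewrite sumR_nil; lra. rewrite !sumR_cons, IHl1; lra. Qed.
Lemma sumR_perm {T} (f : T -> R) l1 l2 : Permutation l1 l2 -> sumR f l1 = sumR f l2.
Proof. induction 1; rewrite ?sumR_cons; lra. Qed.
Lemma sumR_plus {T} (f g : T -> R) l : sumR (fun x => f x + g x) l = sumR f l + sumR g l.
Proof. induction l; rewrite ?sumR_cons, ?sumR_nil; lra. Qed.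
Lemma sumR_scal {T} (f : T -> R) c l : sumR (fun x => c * f x) l = c * sumR f l.
Proof. induction l; rewrite ?sumR_cons, ?sumR_nil. ring. rewrite IHl; ring. Qed.
Lemma sumR_ext {T} (f g : T -> R) l : (forall x, In x l -> f x = g x) -> sumR f l = sumR g l.
Proof. induction l; intros H; rewrite ?sumR_cons, ?sumR_nil; auto.
  rewrite H, IHl; simpl; auto. intros; apply H; simpl; auto. Qed.
Lemma sumR_le {T} (f g : T -> R) l : (forall x, In x l -> f x <= g x) -> sumR f l <= sumR g l.
Proof. induction l; intros H; rewrite ?sumR_cons, ?sumR_nil. lra.
  assert (f a <= g a) by (apply H; simpl; auto).
  assert (sumR f l <= sumR g l) by (apply IHl; intros; apply H; simpl; auto). lra. Qed.
Lemma sumR_zero {T} (f : T -> R) l : (forall x, In x l -> f x = 0) -> sumR f l = 0.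
Proof. induction l; intros H; rewrite ?sumR_cons, ?sumR_nil; auto.
  rewrite IHl, H; simpl; auto. lra. intros; apply H; simpl; auto. Qed.
Lemma sumR_swap {A B} (h : A -> B -> R) l1 l2 :
  sumR (fun a => sumR (fun b => h a b) l2) l1 = sumR (fun b => sumR (fun a => h a b) l1) l2.
Proof. induction l1; rewrite ?sumR_cons, ?sumR_nil.
  rewrite sumR_zero; auto.
  rewrite IHl1, <- sumR_plus. apply sumR_ext; intros; rewrite sumR_cons; auto. Qed.

Lemma sumR_uniq {T} (f : T -> R) l1 : forall l2, NoDup l1 -> NoDup l2 ->
  (forall y, In y l1 -> ~ In y l2 -> f y = 0) ->
  (forall y, In y l2 -> ~ In y l1 -> f y = 0) -> sumR f l1 = sumR f l2.
Proof.
  induction l1 as [|x l1 IH]; intros l2 N1 N2 H1 H2.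
  - rewrite sumR_nil; symmetry; apply sumR_zero; intros y Hy; apply H2; auto.
  - inversion N1; subst. rewrite sumR_cons.
    destruct (classic (In x l2)) as [Hx|Hx].
    + destruct (in_split _ _ Hx) as [A [B ->]].
      rewrite (sumR_perm f (A ++ x :: B) (x :: A ++ B)) by (apply Permutation_sym, Permutation_middle).
      rewrite sumR_cons. f_equal.
      assert (N2' : NoDup (x :: A ++ B)) by (eapply Permutation_NoDup; [apply Permutation_sym, Permutation_middle|]; auto).
      inversion N2'; subst.
      apply IH; auto.
      * intros y Hy Hn. apply H1; simpl; auto. intros Hin.
        apply in_app_or in Hin; destruct Hin as [Hin|[Hin|Hin]]; subst; auto with datatypes.
      * intros y Hy Hn. apply H2. apply in_or_app; apply in_app_or in Hy; simpl; tauto.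
        intros [<-|Hin]; auto.
    + rewrite (H1 x) by (simpl; auto). rewrite IH with (l2 := l2); auto. lra.
      intros y Hy Hn; apply H1; simpl; auto.
      intros y Hy Hn; apply H2; auto. intros [<-|Hin]; auto.
Qed.

Definition dec (T : Type) : forall x y : T, {x = y} + {x <> y} :=
  fun x y => excluded_middle_informative (x = y).

Definition fs {T} (f : T -> R) : Prop := exists l, forall x, f x <> 0 -> In x l.

Definition S {T} (f : T -> R) : R :=
  match excluded_middle_informative (fs f) with
  | left H => sumR f (nodup (dec T) (proj1_sig (constructive_indefinite_description _ H)))
  | right _ => 0
  end.

Lemma S_spec {T} (f : T -> R) l : NoDup l -> (forall x, f x <> 0 -> In x l) -> S f = sumR f l.
Proof.
  intros N H. unfold S. destruct excluded_middle_informative as [Hf|Hf].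
  - destruct constructive_indefinite_description as [l' Hl']; simpl.
    apply sumR_uniq. apply NoDup_nodup. auto.
    intros y _ Hn. destruct (Req_dec (f y) 0); auto. exfalso; auto.
    intros y _ Hn. destruct (Req_dec (f y) 0); auto. exfalso; apply Hn, nodup_In; auto.
  - exfalso; apply Hf; exists l; auto.
Qed.

Lemma fs_ex {T} (f : T -> R) : fs f -> exists l, NoDup l /\ forall x, f x <> 0 -> In x l.
Proof. intros [l H]; exists (nodup (dec T) l); split. apply NoDup_nodup.
  intros; apply nodup_In; auto. Qed.

Lemma S_ext {T} (f g : T -> R) : (forall x, f x = g x) -> S f = S g.
Proof. intros H; replace g with f; auto. apply functional_extensionality; auto. Qed.

Lemma S_zero {T} (f : T -> R) : (forall x, f x = 0) -> S f = 0.
Proof. intros H. rewrite (S_spec f nil). auto. constructor. intros x Hx; exfalso; auto. Qed.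

Lemma S_nz {T} (f : T -> R) : S f <> 0 -> exists x, f x <> 0.
Proof. intros H. apply NNPP; intros Hn; apply H, S_zero; intros x.
  destruct (Req_dec (f x) 0); auto. exfalso; eauto. Qed.

Lemma fs_plus {T} (f g : T -> R) : fs f -> fs g -> fs (fun x => f x + g x).
Proof. intros [l1 H1] [l2 H2]; exists (l1 ++ l2); intros x Hx.
  apply in_or_app. destruct (Req_dec (f x) 0). right; apply H2; lra. left; auto. Qed.
Lemma fs_mul {T} (f g : T -> R) : fs f -> fs (fun x => g x * f x).
Proof. intros [l1 H1]; exists l1; intros x Hx. apply H1; intro E; apply Hx; rewrite E; ring. Qed.
Lemma fs_mulr {T} (f g : T -> R) : fs f -> fs (fun x => f x * g x).
Proof. intros [l1 H1]; exists l1; intros x Hx. apply H1; intro E; apply Hx; rewrite E; ring. Qed.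

Lemma S_plus {T} (f g : T -> R) : fs f -> fs g -> S (fun x => f x + g x) = S f + S g.
Proof. intros [l1 H1] [l2 H2].
  set (l := nodup (dec T) (l1 ++ l2)).
  assert (N : NoDup l) by apply NoDup_nodup.
  assert (I1 : forall x, f x <> 0 -> In x l) by (intros; apply nodup_In, in_or_app; auto).
  assert (I2 : forall x, g x <> 0 -> In x l) by (intros; apply nodup_In, in_or_app; auto).
  rewrite (S_spec f l), (S_spec g l), (S_spec _ l); auto. apply sumR_plus.
  intros x Hx. destruct (Req_dec (f x) 0). apply I2; lra. auto. Qed.

Lemma S_scal {T} (f : T -> R) c : S (fun x => c * f x) = c * S f.
Proof. destruct (classic (fs f)) as [Hf|Hf].
  - destruct (fs_ex f Hf) as [l [N H]]. rewrite (S_spec f l), (S_spec _ l); auto.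
    apply sumR_scal. intros x Hx; apply H; intro E; apply Hx; rewrite E; ring.
  - destruct (Req_dec c 0) as [->|Hc]. rewrite S_zero; intros; ring.
    assert (~ fs (fun x => c * f x)).
    { intros [l Hl]; apply Hf; exists l; intros x Hx; apply Hl. intro E.
      apply Rmult_integral in E; tauto. }
    unfold S; do 2 destruct excluded_middle_informative; try tauto. ring. Qed.

Lemma S_le {T} (f g : T -> R) : fs f -> fs g -> (forall x, f x <= g x) -> S f <= S g.
Proof. intros [l1 H1] [l2 H2] H.
  set (l := nodup (dec T) (l1 ++ l2)).
  rewrite (S_spec f l), (S_spec g l); try apply NoDup_nodup.
  apply sumR_le; auto. all: intros; apply nodup_In, in_or_app; auto. Qed.

Lemma S_nonneg {T} (f : T -> R) : (forall x, 0 <= f x) -> 0 <= S f.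
Proof. intros H. destruct (classic (fs f)) as [Hf|Hf].
  - rewrite <- (S_zero (fun _ : T => 0)) by auto. apply S_le; auto.
    exists nil; intros x Hx; exfalso; auto.
  - unfold S; destruct excluded_middle_informative; try tauto; lra. Qed.

Lemma S_pos {T} (f : T -> R) : (forall x, 0 <= f x) -> 0 < S f -> exists x, 0 < f x.
Proof. intros H Hp. destruct (S_nz f) as [x Hx]. lra. exists x. specialize (H x); lra. Qed.

Lemma fs_sec1 {A B} (h : A * B -> R) a : fs h -> fs (fun b => h (a, b)).
Proof. intros [l H]; exists (map snd l); intros b Hb. apply H in Hb.
  change b with (snd (a,b)); apply in_map; auto. Qed.
Lemma fs_sec2 {A B} (h : A * B -> R) b : fs h -> fs (fun a => h (a, b)).
Proof. intros [l H]; exists (map fst l); intros a Ha. apply H in Ha.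
  change a with (fst (a,b)); apply in_map; auto. Qed.
Lemma fs_S1 {A B} (h : A * B -> R) : fs h -> fs (fun a => S (fun b => h (a, b))).
Proof. intros [l H]; exists (map fst l); intros a Ha. apply S_nz in Ha. destruct Ha as [b Hb].
  apply H in Hb. change a with (fst (a,b)); apply in_map; auto. Qed.
Lemma fs_S2 {A B} (h : A * B -> R) : fs h -> fs (fun b => S (fun a => h (a, b))).
Proof. intros [l H]; exists (map snd l); intros b Hb. apply S_nz in Hb. destruct Hb as [a Ha].
  apply H in Ha. change b with (snd (a,b)); apply in_map; auto. Qed.

Lemma NoDup_prod {A B} (l1 : list A) (l2 : list B) : NoDup l1 -> NoDup l2 -> NoDup (list_prod l1 l2).
Proof. induction 1; intros N2; simpl. constructor.
  apply NoDup_app; auto. apply FinFun.Injective_map_NoDup; auto. intros u v E; inversion E; auto.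
  intros [a b] Hm Hp. apply in_map_iff in Hm. destruct Hm as [b' [E _]]; inversion E; subst.
  apply in_prod_iff in Hp; tauto. Qed.

Lemma sumR_prod {A B} (h : A * B -> R) l1 l2 :
  sumR h (list_prod l1 l2) = sumR (fun a => sumR (fun b => h (a, b)) l2) l1.
Proof. induction l1; simpl; auto. rewrite sumR_app, sumR_cons, IHl1. f_equal.
  clear. induction l2; simpl; auto. rewrite !sumR_cons, IHl2; auto. Qed.

Lemma S_fubini {A B} (h : A * B -> R) : fs h -> S h = S (fun a => S (fun b => h (a, b))).
Proof. intros Hh. destruct (fs_ex h Hh) as [l [N H]].
  set (l1 := nodup (dec A) (map fst l)). set (l2 := nodup (dec B) (map snd l)).
  assert (N1 : NoDup l1) by apply NoDup_nodup. assert (N2 : NoDup l2) by apply NoDup_nodup.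
  assert (HI : forall a b, h (a, b) <> 0 -> In a l1 /\ In b l2).
  { intros a b Hab; apply H in Hab; split; apply nodup_In.
    change a with (fst (a,b)); apply in_map; auto. change b with (snd (a,b)); apply in_map; auto. }
  rewrite (S_spec h (list_prod l1 l2)). rewrite sumR_prod.
  rewrite (S_spec _ l1); auto. apply sumR_ext; intros a _. symmetry; apply S_spec; auto.
  intros b Hb; apply (HI a b Hb).
  intros a Ha; apply S_nz in Ha; destruct Ha as [b Hb]; apply (HI a b Hb).
  apply NoDup_prod; auto. intros [a b] Hab; apply in_prod_iff, HI; auto. Qed.

Lemma S_swap {A B} (h : A * B -> R) : fs h ->
  S (fun a => S (fun b => h (a, b))) = S (fun b => S (fun a => h (a, b))).
Proof. intros Hh. destruct (fs_ex h Hh) as [l [N H]].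
  set (l1 := nodup (dec A) (map fst l)). set (l2 := nodup (dec B) (map snd l)).
  assert (N1 : NoDup l1) by apply NoDup_nodup. assert (N2 : NoDup l2) by apply NoDup_nodup.
  assert (HI : forall a b, h (a, b) <> 0 -> In a l1 /\ In b l2).
  { intros a b Hab; apply H in Hab; split; apply nodup_In.
    change a with (fst (a,b)); apply in_map; auto. change b with (snd (a,b)); apply in_map; auto. }
  rewrite (S_spec _ l1), (S_spec _ l2); auto.
  rewrite (sumR_ext _ (fun a => sumR (fun b => h (a,b)) l2)).
  rewrite sumR_swap. apply sumR_ext. intros b _; symmetry; apply S_spec; auto.
  intros a Ha; apply (HI a b Ha).
  intros a _; apply S_spec; auto. intros b Hb; apply (HI a b Hb).
  intros b Hb; apply S_nz in Hb; destruct Hb as [a Ha]; apply (HI a b Ha).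
  intros a Ha; apply S_nz in Ha; destruct Ha as [b Hb]; apply (HI a b Hb). Qed.

Lemma fs_prod {A B} (f : A -> R) (g : B -> R) : fs f -> fs g -> fs (fun u => f (fst u) * g (snd u)).
Proof. intros [l1 H1] [l2 H2]; exists (list_prod l1 l2); intros [a b] Hab; simpl in Hab.
  apply in_prod_iff; split; [apply H1|apply H2]; intro E; apply Hab; rewrite E; ring. Qed.

Lemma S_prod {A B} (f : A -> R) (g : B -> R) : fs f -> fs g ->
  S (fun u => f (fst u) * g (snd u)) = S f * S g.
Proof. intros Hf Hg. rewrite S_fubini by (apply fs_prod; auto). simpl.
  rewrite (S_ext _ (fun a => f a * S g)). rewrite (S_ext _ (fun a => S g * f a)) by (intros; ring).
  rewrite S_scal; ring. intros a; apply S_scal. Qed.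

Lemma rpow_nonneg x q : 0 <= rpow x q.
Proof. unfold rpow; destruct Rle_dec. lra. unfold Rpower; left; apply exp_pos. Qed.
Lemma rpow_zero q : rpow 0 q = 0.
Proof. unfold rpow; destruct Rle_dec; lra. Qed.
Lemma rpow_pos x q : 0 < x -> rpow x q = Rpower x q.
Proof. intros; unfold rpow; destruct Rle_dec; lra. Qed.
Lemma rpow_le x y q : 0 <= x <= y -> 0 < q -> rpow x q <= rpow y q.
Proof. intros [H1 H2] Hq. destruct (Req_dec x 0) as [->|Hx]. rewrite rpow_zero; apply rpow_nonneg.
  rewrite !rpow_pos by lra. apply Rle_Rpower_l; lra. Qed.
Lemma rpow_lt x y q : 0 <= x < y -> 0 < q -> rpow x q < rpow y q.
Proof. intros [H1 H2] Hq. rewrite (rpow_pos y) by lra. destruct (Req_dec x 0) as [->|Hx].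
  rewrite rpow_zero; unfold Rpower; apply exp_pos.
  rewrite !rpow_pos by lra. apply Rlt_Rpower_l; lra. Qed.
Lemma rpow_inv x p : 0 <= x -> 0 < p -> rpow (rpow x p) (/ p) = x.
Proof. intros Hx Hp. destruct (Req_dec x 0) as [->|H]. rewrite !rpow_zero; auto.
  rewrite (rpow_pos x) by lra. rewrite rpow_pos by (unfold Rpower; apply exp_pos).
  rewrite Rpower_mult, Rinv_r, Rpower_1; lra. Qed.
Lemma rpow_inv' x p : 0 <= x -> 0 < p -> rpow (rpow x (/ p)) p = x.
Proof. intros Hx Hp. destruct (Req_dec x 0) as [->|H]. rewrite !rpow_zero; auto.
  rewrite (rpow_pos x) by lra. rewrite rpow_pos by (unfold Rpower; apply exp_pos).
  rewrite Rpower_mult, Rinv_l, Rpower_1; lra. Qed.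
Lemma rpow_mul x y q : 0 <= x -> 0 <= y -> rpow (x * y) q = rpow x q * rpow y q.
Proof. intros Hx Hy. destruct (Req_dec x 0) as [->|H1]. rewrite Rmult_0_l, !rpow_zero; ring.
  destruct (Req_dec y 0) as [->|H2]. rewrite Rmult_0_r, !rpow_zero; ring.
  rewrite !rpow_pos; try lra. rewrite Rpower_mult_distr; lra. apply Rmult_lt_0_compat; lra. Qed.
Lemma rpow_max a b q : rpow (Rmax a b) q <= rpow a q + rpow b q.
Proof. assert (H1 := rpow_nonneg a q); assert (H2 := rpow_nonneg b q).
  unfold Rmax; destruct Rle_dec; lra. Qed.
Lemma rpow_add a b q : 0 <= a -> 0 <= b -> 0 < q -> rpow (a + b) q <= rpow 2 q * (rpow a q + rpow b q).
Proof. intros Ha Hb Hq. apply Rle_trans with (rpow (2 * Rmax a b) q).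
  apply rpow_le; auto. split. lra. unfold Rmax; destruct Rle_dec; lra.
  rewrite rpow_mul by (try lra; unfold Rmax; destruct Rle_dec; lra).
  apply Rmult_le_compat_l. apply rpow_nonneg.
  assert (H1 := rpow_nonneg a q); assert (H2 := rpow_nonneg b q).
  unfold Rmax; destruct Rle_dec; lra. Qed.

Definition cpl {A B} (pi : A * B -> R) (mu : A -> R) (nu : B -> R) : Prop :=
  (forall u, 0 <= pi u) /\ fs pi /\ (forall a, S (fun b => pi (a, b)) = mu a) /\
  (forall b, S (fun a => pi (a, b)) = nu b).

Definition cost {T} (d : T -> T -> R) (p : R) (pi : T * T -> R) : R :=
  S (fun u => pi u * rpow (d (fst u) (snd u)) p).

Lemma cost_nonneg {T} (d : T -> T -> R) p pi mu nu : cpl pi mu nu -> 0 <= cost d p pi.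
Proof. intros [H _]. apply S_nonneg; intros; apply Rmult_le_pos; auto; apply rpow_nonneg. Qed.

Lemma fin_prob_iff {T} (mu : T -> R) : fin_prob mu <-> (forall x, 0 <= mu x) /\ fs mu /\ S mu = 1.
Proof. split.
  - intros [H [l [N [Hl Hs]]]]. split; auto. split. exists l; auto. rewrite (S_spec mu l); auto.
  - intros [H [Hf Hs]]. split; auto. destruct (fs_ex mu Hf) as [l [N Hl]]. exists l; split; auto.
    split; auto. rewrite <- (S_spec mu l); auto. Qed.

Lemma cpl_cc {T} (d : T -> T -> R) p pi mu nu : cpl pi mu nu -> coupling_cost d p mu nu (cost d p pi).
Proof. intros [Hp [Hf [H1 H2]]]. destruct (fs_ex pi Hf) as [l [N Hl]].
  set (l1 := nodup (dec T) (map fst l)). set (l2 := nodup (dec T) (map snd l)).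
  assert (HI : forall a b, pi (a, b) <> 0 -> In a l1 /\ In b l2).
  { intros a b Hab; apply Hl in Hab; split; apply nodup_In.
    change a with (fst (a,b)); apply in_map; auto. change b with (snd (a,b)); apply in_map; auto. }
  exists pi, l1, l2. split. apply NoDup_nodup. split. apply NoDup_nodup.
  split. intros; apply Hp. split. auto.
  split. intros a Ha. rewrite <- H1 in Ha. apply S_nz in Ha. destruct Ha as [b Hb]. apply (HI a b Hb).
  split. intros b Hb. rewrite <- H2 in Hb. apply S_nz in Hb. destruct Hb as [a Ha]. apply (HI a b Ha).
  split. intros a. rewrite <- H1. symmetry; apply S_spec. apply NoDup_nodup. intros b Hb; apply (HI a b Hb).
  split. intros b. rewrite <- H2. symmetry; apply S_spec. apply NoDup_nodup. intros a Ha; apply (HI a b Ha).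
  unfold cost. rewrite S_fubini by (apply fs_mulr; auto). simpl.
  rewrite (S_spec _ l1). apply sumR_ext; intros a _. apply S_spec. apply NoDup_nodup.
  intros b Hb. apply (HI a b). intro E; apply Hb; rewrite E; ring.
  apply NoDup_nodup. intros a Ha; apply S_nz in Ha. destruct Ha as [b Hb]. apply (HI a b).
  intro E; apply Hb; rewrite E; ring. Qed.

Lemma cc_cpl {T} (d : T -> T -> R) p mu nu c : coupling_cost d p mu nu c ->
  exists pi, cpl pi mu nu /\ c = cost d p pi.
Proof. intros [pi [l1 [l2 [N1 [N2 [Hp [HI [Hm [Hn [H1 [H2 Hc]]]]]]]]]]].
  exists pi.
  assert (Hf : fs pi).
  { exists (list_prod l1 l2). intros [a b] H. apply in_prod_iff. apply HI; auto. }
  split. split. intros [a b]; apply Hp. split. auto.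
  split. intros a; rewrite <- H1. apply S_spec; auto. intros b Hb; apply (HI a b Hb).
  intros b; rewrite <- H2. apply S_spec; auto. intros a Ha; apply (HI a b Ha).
  rewrite Hc. unfold cost. rewrite S_fubini by (apply fs_mulr; auto). simpl.
  symmetry. rewrite (S_spec _ l1); auto. apply sumR_ext; intros a _. apply S_spec; auto.
  intros b Hb. apply (HI a b). intro E; apply Hb; rewrite E; ring.
  intros a Ha; apply S_nz in Ha. destruct Ha as [b Hb]. apply (HI a b).
  intro E; apply Hb; rewrite E; ring. Qed.

Lemma cpl_prodm {A B} (mu : A -> R) (nu : B -> R) : fin_prob mu -> fin_prob nu ->
  cpl (fun u => mu (fst u) * nu (snd u)) mu nu.
Proof. intros Hm Hn. apply fin_prob_iff in Hm, Hn. destruct Hm as [Hm0 [Hm1 Hm2]], Hn as [Hn0 [Hn1 Hn2]].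
  split. intros; apply Rmult_le_pos; auto. split. apply fs_prod; auto.
  split. intros a; simpl. rewrite S_scal; rewrite Hn2; ring.
  intros b; simpl. rewrite (S_ext _ (fun a => nu b * mu a)) by (intros; ring). rewrite S_scal, Hm2; ring. Qed.

Lemma Wp_le {T} (d : T -> T -> R) p pi mu nu : 0 < p -> cpl pi mu nu ->
  Wp d p mu nu <= rpow (cost d p pi) (/ p).
Proof. intros Hp Hc. unfold Wp. destruct (Glb_Rbar_correct (coupling_cost d p mu nu)) as [Hlb Hg].
  assert (H0 : Rbar_le (Finite 0) (Glb_Rbar (coupling_cost d p mu nu))).
  { apply Hg. intros c Hcc. destruct (cc_cpl d p mu nu c Hcc) as [pi' [Hpi' ->]].
    simpl. eapply cost_nonneg; eauto. }
  assert (H1 := Hlb _ (cpl_cc d p pi mu nu Hc)).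
  destruct (Glb_Rbar (coupling_cost d p mu nu)) as [g| |]; simpl in *; try tauto.
  apply rpow_le; [split; assumption | apply Rinv_0_lt_compat; assumption]. Qed.

Lemma Wp_small {T} (d : T -> T -> R) p mu nu delta : 0 < p -> fin_prob mu -> fin_prob nu ->
  Wp d p mu nu < delta -> exists pi, cpl pi mu nu /\ cost d p pi < rpow delta p.
Proof. intros Hp Hm Hn HW. unfold Wp in HW.
  destruct (Glb_Rbar_correct (coupling_cost d p mu nu)) as [Hlb Hg].
  assert (H0 : Rbar_le (Finite 0) (Glb_Rbar (coupling_cost d p mu nu))).
  { apply Hg. intros c Hcc. destruct (cc_cpl d p mu nu c Hcc) as [pi' [Hpi' ->]].
    simpl. eapply cost_nonneg; eauto. }
  assert (H1 := Hlb _ (cpl_cc d p _ mu nu (cpl_prodm mu nu Hm Hn))).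
  destruct (Glb_Rbar (coupling_cost d p mu nu)) as [g| |] eqn:Eg; simpl in *; try tauto.
  assert (Hd : 0 < delta). { eapply Rle_lt_trans; [|apply HW]. apply rpow_nonneg. }
  assert (Hgl : g < rpow delta p).
  { destruct (Rlt_or_le g (rpow delta p)) as [h|h]; auto. exfalso.
    assert (rpow (rpow delta p) (/ p) <= rpow g (/p)).
    { apply rpow_le. split; auto. apply rpow_nonneg. apply Rinv_0_lt_compat; auto. }
    rewrite rpow_inv in H; lra. }
  apply NNPP; intros Hno.
  assert (Hl : Rbar_le (Finite (rpow delta p)) (Finite g)).
  { apply Hg. intros c Hcc. destruct (cc_cpl d p mu nu c Hcc) as [pi' [Hpi' ->]].
    simpl. destruct (Rle_lt_dec (rpow delta p) (cost d p pi')); auto. exfalso; eauto. }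
  simpl in Hl; lra. Qed.

Lemma W_of_cost {T} (d : T -> T -> R) p : 0 < p -> forall eps, 0 < eps -> exists E, 0 < E /\
  forall pi mu nu, cpl pi mu nu -> cost d p pi < E -> Wp d p mu nu < eps.
Proof. intros Hp eps He. exists (rpow eps p). split. rewrite rpow_pos by lra; unfold Rpower; apply exp_pos.
  intros pi mu nu Hc Hlt. eapply Rle_lt_trans. apply (Wp_le d p pi mu nu Hp Hc).
  rewrite <- (rpow_inv eps p) by lra. apply rpow_lt. split; auto. eapply cost_nonneg; eauto.
  apply Rinv_0_lt_compat; auto. Qed.

Lemma cost_of_W {T} (d : T -> T -> R) p : 0 < p -> forall E, 0 < E -> exists delta, 0 < delta /\
  forall mu nu, fin_prob mu -> fin_prob nu -> Wp d p mu nu < delta ->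
  exists pi, cpl pi mu nu /\ cost d p pi < E.
Proof. intros Hp E HE. exists (rpow E (/ p)). split. rewrite rpow_pos by lra; unfold Rpower; apply exp_pos.
  intros mu nu Hm Hn HW. destruct (Wp_small d p mu nu _ Hp Hm Hn HW) as [pi [H1 H2]].
  exists pi; split; auto. rewrite rpow_inv' in H2; lra. Qed.

Definition ind (P : Prop) : R := if excluded_middle_informative P then 1 else 0.
Lemma ind_T (P : Prop) : P -> ind P = 1.
Proof. unfold ind; destruct excluded_middle_informative; tauto. Qed.
Lemma ind_F (P : Prop) : ~ P -> ind P = 0.
Proof. unfold ind; destruct excluded_middle_informative; tauto. Qed.
Lemma ind_nz (P : Prop) : ind P <> 0 -> P.
Proof. unfold ind; destruct excluded_middle_informative; auto. lra. Qed.
Lemma ind_nonneg P : 0 <= ind P.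
Proof. unfold ind; destruct excluded_middle_informative; lra. Qed.
Lemma ind_sym {A} (x y : A) : ind (x = y) = ind (y = x).
Proof. destruct (classic (x = y)). rewrite !ind_T; auto. rewrite !ind_F; auto. Qed.

Lemma S_ind {A} (g : A -> R) c : S (fun z => ind (c = z) * g z) = g c.
Proof. rewrite (S_spec _ (c :: nil)). rewrite sumR_cons, sumR_nil, ind_T; auto; ring.
  repeat constructor; auto. intros z Hz. left. apply ind_nz. intro E; apply Hz; rewrite E; ring. Qed.

Definition push {A B} (F : A -> B) (f : A -> R) : B -> R :=
  fun b => S (fun a => f a * ind (F a = b)).

Lemma fs_push {A B} (F : A -> B) f : fs f -> fs (push F f).
Proof. intros [l H]. exists (map F l). intros b Hb. apply S_nz in Hb. destruct Hb as [a Ha].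
  assert (f a <> 0) by (intro E; apply Ha; rewrite E; ring).
  assert (F a = b) by (apply ind_nz; intro E; apply Ha; rewrite E; ring).
  subst; apply in_map; auto. Qed.

Lemma push_nonneg {A B} (F : A -> B) f : (forall a, 0 <= f a) -> forall b, 0 <= push F f b.
Proof. intros H b; apply S_nonneg; intros; apply Rmult_le_pos; auto; apply ind_nonneg. Qed.

Lemma push_spec {A B} (F : A -> B) f h : fs f ->
  S (fun z => push F f z * h z) = S (fun u => f u * h (F u)).
Proof. intros Hf. unfold push.
  set (H := fun w : B * A => f (snd w) * ind (F (snd w) = fst w) * h (fst w)).
  assert (HH : fs H).
  { destruct Hf as [l Hl]. exists (map (fun u => (F u, u)) l). intros [z u] Hz; unfold H in Hz; simpl in Hz.
    assert (f u <> 0) by (intro E; apply Hz; rewrite E; ring).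
    assert (F u = z) by (apply ind_nz; intro E; apply Hz; rewrite E; ring).
    subst; apply (in_map (fun u => (F u, u))); auto. }
  transitivity (S (fun z => S (fun u => H (z, u)))).
  { apply S_ext; intros z. rewrite Rmult_comm, <- S_scal. apply S_ext; intros u; unfold H; simpl; ring. }
  rewrite (S_swap H HH). apply S_ext; intros u. unfold H; simpl.
  rewrite <- (S_ind h (F u)), <- S_scal. apply S_ext; intros z; ring. Qed.

Lemma S_push {A B} (F : A -> B) f : fs f -> S (push F f) = S f.
Proof. intros Hf. rewrite <- (S_ext (fun z => push F f z * 1)) by (intros; ring).
  rewrite push_spec by auto. apply S_ext; intros; ring. Qed.

Lemma push_comp {A B C} (F : A -> B) (G : B -> C) f : fs f ->
  forall c, push G (push F f) c = push (fun a => G (F a)) f c.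
Proof. intros Hf c. unfold push at 1. rewrite (push_spec F f (fun w => ind (G w = c))) by auto. reflexivity. Qed.

Lemma push_fst {A B} (pi : A * B -> R) : fs pi -> forall a, S (fun b => pi (a, b)) = push fst pi a.
Proof. intros Hf a. unfold push. rewrite S_fubini by (apply fs_mulr; auto). simpl.
  rewrite <- (S_ind (fun a0 => S (fun b => pi (a0, b))) a). apply S_ext; intros a0.
  rewrite ind_sym, <- S_scal. apply S_ext; intros; ring. Qed.

Lemma push_snd {A B} (pi : A * B -> R) : fs pi -> forall b, S (fun a => pi (a, b)) = push snd pi b.
Proof. intros Hf b. unfold push. rewrite S_fubini by (apply fs_mulr; auto). simpl.
  assert (E := S_swap (fun w => pi w * ind (snd w = b)) (fs_mulr pi (fun w => ind (snd w = b)) Hf)).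
  simpl in E. rewrite E. rewrite <- (S_ind (fun b0 => S (fun a => pi (a, b0))) b). apply S_ext; intros b0.
  rewrite ind_sym, <- S_scal. apply S_ext; intros; ring. Qed.

Lemma cpl_push {A B} (pi : A * B -> R) mu nu : (forall u, 0 <= pi u) -> fs pi ->
  (forall a, push fst pi a = mu a) -> (forall b, push snd pi b = nu b) -> cpl pi mu nu.
Proof. intros H0 H1 H2 H3. split; auto. split; auto. split; intros.
  rewrite push_fst; auto. rewrite push_snd; auto. Qed.

Lemma cpl_fst {A B} (pi : A * B -> R) mu nu : cpl pi mu nu -> forall a, push fst pi a = mu a.
Proof. intros [H0 [H1 [H2 H3]]] a. rewrite <- push_fst; auto. Qed.
Lemma cpl_snd {A B} (pi : A * B -> R) mu nu : cpl pi mu nu -> forall b, push snd pi b = nu b.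
Proof. intros [H0 [H1 [H2 H3]]] b. rewrite <- push_snd; auto. Qed.

Definition margX {X Y} (mu : X * Y -> R) : X -> R := push fst mu.
Definition margY {X Y} (mu : X * Y -> R) : Y -> R := push snd mu.
Definition prodm {X Y} (a : X -> R) (b : Y -> R) : X * Y -> R := fun u => a (fst u) * b (snd u).
Definition mix {T} (t : R) (mu nu : T -> R) : T -> R := fun u => (1 - t) * mu u + t * nu u.

Lemma fp_push {A B} (F : A -> B) mu : fin_prob mu -> fin_prob (push F mu).
Proof. intros H; apply fin_prob_iff in H; apply fin_prob_iff. destruct H as [H0 [H1 H2]].
  split. apply push_nonneg; auto. split. apply fs_push; auto. rewrite S_push; auto. Qed.

Lemma fp_prodm {X Y} (a : X -> R) (b : Y -> R) : fin_prob a -> fin_prob b -> fin_prob (prodm a b).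
Proof. intros Ha Hb; apply fin_prob_iff in Ha, Hb; apply fin_prob_iff.
  destruct Ha as [Ha0 [Ha1 Ha2]], Hb as [Hb0 [Hb1 Hb2]]. unfold prodm.
  split. intros; apply Rmult_le_pos; auto. split. apply fs_prod; auto. rewrite S_prod; auto. rewrite Ha2, Hb2; ring. Qed.

Lemma fp_mix {T} (t : R) (mu nu : T -> R) : 0 <= t <= 1 -> fin_prob mu -> fin_prob nu -> fin_prob (mix t mu nu).
Proof. intros Ht Hm Hn; apply fin_prob_iff in Hm, Hn; apply fin_prob_iff.
  destruct Hm as [Hm0 [Hm1 Hm2]], Hn as [Hn0 [Hn1 Hn2]]. unfold mix.
  split. intros; specialize (Hm0 x); specialize (Hn0 x). nra.
  split. apply fs_plus; apply fs_mul; auto.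
  rewrite S_plus by (apply fs_mul; auto). rewrite !S_scal, Hm2, Hn2; ring. Qed.

Lemma margX_prodm {X Y} (a : X -> R) (b : Y -> R) : fin_prob a -> fin_prob b -> margX (prodm a b) = a.
Proof. intros Ha Hb; apply fin_prob_iff in Ha, Hb.
  destruct Ha as [Ha0 [Ha1 Ha2]], Hb as [Hb0 [Hb1 Hb2]]. apply functional_extensionality; intros x.
  unfold margX. rewrite <- push_fst by (apply fs_prod; auto). unfold prodm; simpl.
  rewrite S_scal, Hb2; ring. Qed.
Lemma margY_prodm {X Y} (a : X -> R) (b : Y -> R) : fin_prob a -> fin_prob b -> margY (prodm a b) = b.
Proof. intros Ha Hb; apply fin_prob_iff in Ha, Hb.
  destruct Ha as [Ha0 [Ha1 Ha2]], Hb as [Hb0 [Hb1 Hb2]]. apply functional_extensionality; intros y.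
  unfold margY. rewrite <- push_snd by (apply fs_prod; auto). unfold prodm; simpl.
  rewrite (S_ext _ (fun x => b y * a x)) by (intros; ring). rewrite S_scal, Ha2; ring. Qed.

Lemma supp_push {A B} (F : A -> B) mu b : (forall a, 0 <= mu a) -> supp (push F mu) b -> exists a, supp mu a /\ F a = b.
Proof. intros H0 H. unfold supp, push in H. apply S_pos in H.
  destruct H as [a Ha]. exists a. assert (ind (F a = b) <> 0) by (intro E; rewrite E in Ha; lra).
  split. unfold supp. assert (h := ind_nonneg (F a = b)). specialize (H0 a).
  destruct (Req_dec (mu a) 0) as [E|E]. rewrite E in Ha; lra. lra. apply ind_nz; auto.
  intros; apply Rmult_le_pos; auto; apply ind_nonneg. Qed.

Lemma supp_prodm {X Y} (a : X -> R) (b : Y -> R) u : (forall x, 0 <= a x) -> (forall y, 0 <= b y) ->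
  supp (prodm a b) u -> supp a (fst u) /\ supp b (snd u).
Proof. unfold supp, prodm; intros Ha Hb H. specialize (Ha (fst u)); specialize (Hb (snd u)).
  split; destruct (Req_dec (a (fst u)) 0) as [E|E]; destruct (Req_dec (b (snd u)) 0) as [E'|E'];
  try rewrite E in H; try rewrite E' in H; lra. Qed.

Lemma supp_mix {T} t (mu nu : T -> R) u : (forall x, 0 <= mu x) -> (forall x, 0 <= nu x) ->
  supp (mix t mu nu) u -> supp mu u \/ supp nu u.
Proof. unfold supp, mix; intros Hm Hn H. destruct (Rlt_or_le 0 (mu u)); auto.
  destruct (Rlt_or_le 0 (nu u)); auto. specialize (Hm u); specialize (Hn u).
  assert (E1 : mu u = 0) by lra. assert (E2 : nu u = 0) by lra. rewrite E1, E2 in H. lra. Qed.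

Lemma fs_comp {A B} (g : B -> R) (F : A -> B) (G : B -> A) : (forall x, G (F x) = x) -> fs g -> fs (fun x => g (F x)).
Proof. intros HG [l H]. exists (map G l). intros x Hx. rewrite <- (HG x). apply in_map; auto. Qed.

Lemma S_reindex {A B} (g : B -> R) (F : A -> B) (G : B -> A) : (forall x, G (F x) = x) ->
  (forall y, F (G y) = y) -> fs g -> S (fun x => g (F x)) = S g.
Proof. intros H1 H2 Hg. destruct (fs_ex g Hg) as [l [N Hl]].
  rewrite (S_spec g l), (S_spec _ (map G l)); auto.
  - unfold sumR. rewrite map_map. f_equal. apply map_ext_in. intros; rewrite H2; auto.
  - apply FinFun.Injective_map_NoDup; auto. intros u v E. rewrite <- (H2 u), <- (H2 v), E; auto.
  - intros x Hx. rewrite <- (H1 x). apply in_map; auto. Qed.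

Lemma sumR_nonneg {A} (f : A -> R) l : (forall y, 0 <= f y) -> 0 <= sumR f l.
Proof. intros H; induction l. rewrite sumR_nil; lra. rewrite sumR_cons. specialize (H a); lra. Qed.

Lemma sumR_ge_term {A} (f : A -> R) x l : (forall y, 0 <= f y) -> In x l -> f x <= sumR f l.
Proof. intros H0 E. induction l. inversion E. rewrite sumR_cons. destruct E as [<-|E].
  assert (0 <= sumR f l) by (apply sumR_nonneg; auto). lra.
  specialize (H0 a); specialize (IHl E); lra. Qed.

Lemma S_ge_term {A} (f : A -> R) x : (forall y, 0 <= f y) -> fs f -> f x <= S f.
Proof. intros H0 Hf. destruct (fs_ex f Hf) as [l [N Hl]]. rewrite (S_spec f l); auto.
  destruct (Req_dec (f x) 0) as [E|E]. rewrite E. apply sumR_nonneg; auto.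
  apply sumR_ge_term; auto. Qed.

Lemma diam_bound {T} (d : T -> T -> R) (mu : T -> R) : (forall x y, 0 <= d x y) -> fs mu ->
  exists D, 0 <= D /\ forall u v, 0 < mu u -> 0 < mu v -> d u v <= D.
Proof. intros Hd [l Hl]. exists (sumR (fun u => sumR (fun v => d u v) l) l). split.
  - apply sumR_nonneg; intros; apply sumR_nonneg; auto.
  - intros u v Hu Hv. apply Rle_trans with (sumR (fun v => d u v) l).
    apply sumR_ge_term; auto. apply Hl; lra.
    apply (sumR_ge_term (fun u => sumR (fun v => d u v) l)). intros; apply sumR_nonneg; auto. apply Hl; lra. Qed.

Lemma fs_ext {A} (f g : A -> R) : (forall x, f x = g x) -> fs f -> fs g.
Proof. intros E [l H]; exists l; intros x Hx; apply H; rewrite E; auto. Qed.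

Lemma S_cpl {A B} (pi : A * B -> R) mu nu : cpl pi mu nu -> S pi = S mu.
Proof. intros [H0 [H1 [H2 H3]]]. rewrite S_fubini; auto. apply S_ext; auto. Qed.

Definition swp {A B} (w : A * B) : B * A := (snd w, fst w).
Definition tp {A B} (pi : A * B -> R) : B * A -> R := fun w => pi (swp w).

Lemma cpl_tp {A B} (pi : A * B -> R) mu nu : cpl pi mu nu -> cpl (tp pi) nu mu.
Proof. intros [H0 [H1 [H2 H3]]]. split. intros; apply H0. split.
  apply (fs_comp pi swp swp); auto. intros [a b]; reflexivity.
  split; intros; unfold tp, swp; simpl; auto. Qed.

Lemma cost_tp {T} (d : T -> T -> R) p (pi : T * T -> R) : (forall x y, d x y = d y x) -> fs pi ->
  cost d p (tp pi) = cost d p pi.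
Proof. intros Hs Hf. unfold cost, tp.
  rewrite <- (S_reindex (fun u => pi u * rpow (d (fst u) (snd u)) p) swp swp).
  apply S_ext; intros [a b]; unfold swp; simpl. rewrite Hs; auto.
  intros [a b]; reflexivity. intros [a b]; reflexivity. apply fs_mulr; auto. Qed.

Lemma cpl_mix3 {A B} (p1 p2 p3 : A * B -> R) m1 m2 m3 n1 n2 n3 c1 c2 c3 (m : A -> R) (n : B -> R) :
  0 <= c1 -> 0 <= c2 -> 0 <= c3 -> cpl p1 m1 n1 -> cpl p2 m2 n2 -> cpl p3 m3 n3 ->
  (forall a, m a = c1 * m1 a + c2 * m2 a + c3 * m3 a) ->
  (forall b, n b = c1 * n1 b + c2 * n2 b + c3 * n3 b) ->
  cpl (fun u => c1 * p1 u + c2 * p2 u + c3 * p3 u) m n.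
Proof. intros h1 h2 h3 [a0 [a1 [a2 a3]]] [b0 [b1 [b2 b3]]] [e0 [e1 [e2 e3]]] Hm Hn.
  split. intros u; specialize (a0 u); specialize (b0 u); specialize (e0 u).
  assert (0 <= c1 * p1 u) by (apply Rmult_le_pos; auto).
  assert (0 <= c2 * p2 u) by (apply Rmult_le_pos; auto).
  assert (0 <= c3 * p3 u) by (apply Rmult_le_pos; auto). lra.
  split. repeat apply fs_plus; apply fs_mul; auto.
  split.
  - intros a. rewrite S_plus, S_plus, !S_scal. rewrite a2, b2, e2; auto.
    all: try apply fs_plus; try apply fs_mul; try apply fs_sec1; auto.
  - intros b. rewrite S_plus, S_plus, !S_scal. rewrite a3, b3, e3; auto.
    all: try apply fs_plus; try apply fs_mul; try apply fs_sec2; auto.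
Qed.

Lemma cost_mix3 {T} (d : T -> T -> R) p (p1 p2 p3 : T * T -> R) c1 c2 c3 :
  fs p1 -> fs p2 -> fs p3 ->
  cost d p (fun u => c1 * p1 u + c2 * p2 u + c3 * p3 u) = c1 * cost d p p1 + c2 * cost d p p2 + c3 * cost d p p3.
Proof. intros f1 f2 f3. unfold cost.
  rewrite (S_ext _ (fun u => (c1 * (p1 u * rpow (d (fst u) (snd u)) p) + c2 * (p2 u * rpow (d (fst u) (snd u)) p))
     + c3 * (p3 u * rpow (d (fst u) (snd u)) p))) by (intros; ring).
  rewrite S_plus, S_plus, !S_scal; auto.
  all: try apply fs_plus; apply fs_mul; apply fs_mulr; auto. Qed.

Definition tr {A B C D} (w : (A * B) * (C * D)) : (A * C) * (B * D) :=
  ((fst (fst w), fst (snd w)), (snd (fst w), snd (snd w))).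
Lemma tr_tr {A B C D} (w : (A * B) * (C * D)) : tr (tr w) = w.
Proof. destruct w as [[a b] [c d]]; reflexivity. Qed.

Definition prodc {X Y} (pA : X * X -> R) (pB : Y * Y -> R) : (X * Y) * (X * Y) -> R :=
  fun w => pA (fst (tr w)) * pB (snd (tr w)).

Lemma cpl_prodc {X Y} (pA : X * X -> R) (pB : Y * Y -> R) a a' b b' :
  cpl pA a a' -> cpl pB b b' -> cpl (prodc pA pB) (prodm a b) (prodm a' b').
Proof. intros [a0 [a1 [a2 a3]]] [b0 [b1 [b2 b3]]].
  split. intros; unfold prodc; apply Rmult_le_pos; auto.
  split. apply (fs_comp (fun z => pA (fst z) * pB (snd z)) tr tr). apply tr_tr. apply fs_prod; auto.
  split.
  - intros u. unfold prodc, prodm, tr; simpl.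
    assert (E := S_prod (fun x => pA (fst u, x)) (fun y => pB (snd u, y)) (fs_sec1 _ _ a1) (fs_sec1 _ _ b1)).
    cbv beta in E. rewrite E, a2, b2; auto.
  - intros v. unfold prodc, prodm, tr; simpl.
    assert (E := S_prod (fun x => pA (x, fst v)) (fun y => pB (y, snd v)) (fs_sec2 _ _ a1) (fs_sec2 _ _ b1)).
    cbv beta in E. rewrite E, a3, b3; auto.
Qed.

Lemma cost_prodc {X Y} (dX : X -> X -> R) (dY : Y -> Y -> R) p (pA : X * X -> R) (pB : Y * Y -> R) a a' b b' :
  0 < p -> (forall x y, 0 <= dX x y) -> (forall x y, 0 <= dY x y) ->
  cpl pA a a' -> cpl pB b b' -> fin_prob a -> fin_prob b ->
  cost (max_dist dX dY) p (prodc pA pB) <= cost dX p pA + cost dY p pB.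
Proof. intros Hp HX HY HA HB Fa Fb.
  assert (SA : S pA = 1). { rewrite (S_cpl _ _ _ HA). apply fin_prob_iff in Fa; tauto. }
  assert (SB : S pB = 1). { rewrite (S_cpl _ _ _ HB). apply fin_prob_iff in Fb; tauto. }
  destruct HA as [a0 [a1 [a2 a3]]], HB as [b0 [b1 [b2 b3]]].
  assert (Ff : fs (prodc pA pB)).
  { apply (fs_comp (fun z => pA (fst z) * pB (snd z)) tr tr). apply tr_tr. apply fs_prod; auto. }
  set (G1 := fun z : (X * X) * (Y * Y) => (pA (fst z) * rpow (dX (fst (fst z)) (snd (fst z))) p) * pB (snd z)).
  set (G2 := fun z : (X * X) * (Y * Y) => pA (fst z) * (pB (snd z) * rpow (dY (fst (snd z)) (snd (snd z))) p)).
  assert (fG1 : fs G1) by (exact (fs_prod (fun z => pA z * rpow (dX (fst z) (snd z)) p) pB (fs_mulr _ _ a1) b1)).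
  assert (fG2 : fs G2) by (exact (fs_prod pA (fun z => pB z * rpow (dY (fst z) (snd z)) p) a1 (fs_mulr _ _ b1))).
  assert (E1 : S (fun w => G1 (tr w)) = cost dX p pA).
  { rewrite (S_reindex G1 tr tr) by (try apply tr_tr; auto).
    unfold G1. assert (E := S_prod (fun z => pA z * rpow (dX (fst z) (snd z)) p) pB (fs_mulr _ _ a1) b1).
    cbv beta in E. rewrite E, SB. unfold cost; ring. }
  assert (E2 : S (fun w => G2 (tr w)) = cost dY p pB).
  { rewrite (S_reindex G2 tr tr) by (try apply tr_tr; auto).
    unfold G2. assert (E := S_prod pA (fun z => pB z * rpow (dY (fst z) (snd z)) p) a1 (fs_mulr _ _ b1)).
    cbv beta in E. rewrite E, SA. unfold cost; ring. }
  rewrite <- E1, <- E2. rewrite <- S_plus.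
  unfold cost. apply S_le. apply fs_mulr; auto.
  apply fs_plus; (apply (fs_comp _ tr tr); [apply tr_tr|auto]).
  intros w. unfold G1, G2, prodc, max_dist, tr; simpl.
  assert (h := rpow_max (dX (fst (fst w)) (fst (snd w))) (dY (snd (fst w)) (snd (snd w))) p).
  assert (0 <= pA (fst (fst w), fst (snd w)) * pB (snd (fst w), snd (snd w))) by (apply Rmult_le_pos; auto).
  apply Rle_trans with (pA (fst (fst w), fst (snd w)) * pB (snd (fst w), snd (snd w)) *
    (rpow (dX (fst (fst w)) (fst (snd w))) p + rpow (dY (snd (fst w)) (snd (snd w))) p)).
  apply Rmult_le_compat_l; auto. right; ring.
  all: (apply (fs_comp _ tr tr); [apply tr_tr|auto]).
Qed.

Definition piX {X Y} (pi : (X * Y) * (X * Y) -> R) : X * X -> R :=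
  push (fun w => (fst (fst w), fst (snd w))) pi.
Definition piY {X Y} (pi : (X * Y) * (X * Y) -> R) : Y * Y -> R :=
  push (fun w => (snd (fst w), snd (snd w))) pi.

Lemma cpl_mu_eq {A B} (pi : A * B -> R) mu nu : cpl pi mu nu -> mu = push fst pi /\ nu = push snd pi.
Proof. intros H; split; apply functional_extensionality; intros; symmetry.
  apply (cpl_fst _ _ _ H). apply (cpl_snd _ _ _ H). Qed.

Lemma cpl_piX {X Y} (pi : (X * Y) * (X * Y) -> R) mu nu : cpl pi mu nu -> cpl (piX pi) (margX mu) (margX nu).
Proof. intros H. destruct (cpl_mu_eq _ _ _ H) as [-> ->]. destruct H as [h0 [h1 _]].
  apply cpl_push. apply push_nonneg; auto. apply fs_push; auto.
  intros a; unfold piX, margX; rewrite !push_comp; auto.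
  intros a; unfold piX, margX; rewrite !push_comp; auto. Qed.
Lemma cpl_piY {X Y} (pi : (X * Y) * (X * Y) -> R) mu nu : cpl pi mu nu -> cpl (piY pi) (margY mu) (margY nu).
Proof. intros H. destruct (cpl_mu_eq _ _ _ H) as [-> ->]. destruct H as [h0 [h1 _]].
  apply cpl_push. apply push_nonneg; auto. apply fs_push; auto.
  intros a; unfold piY, margY; rewrite !push_comp; auto.
  intros a; unfold piY, margY; rewrite !push_comp; auto. Qed.

Lemma cost_piX {X Y} (dX : X -> X -> R) (dY : Y -> Y -> R) p (pi : (X * Y) * (X * Y) -> R) mu nu :
  0 < p -> (forall x y, 0 <= dX x y) -> cpl pi mu nu -> cost dX p (piX pi) <= cost (max_dist dX dY) p pi.
Proof. intros Hp HX [h0 [h1 _]]. unfold cost, piX.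
  rewrite (push_spec _ pi (fun z => rpow (dX (fst z) (snd z)) p)) by auto. simpl.
  apply S_le; try apply fs_mulr; auto. intros u. apply Rmult_le_compat_l; auto.
  apply rpow_le; auto. split; auto. unfold max_dist; apply Rmax_l. Qed.
Lemma cost_piY {X Y} (dX : X -> X -> R) (dY : Y -> Y -> R) p (pi : (X * Y) * (X * Y) -> R) mu nu :
  0 < p -> (forall x y, 0 <= dY x y) -> cpl pi mu nu -> cost dY p (piY pi) <= cost (max_dist dX dY) p pi.
Proof. intros Hp HY [h0 [h1 _]]. unfold cost, piY.
  rewrite (push_spec _ pi (fun z => rpow (dY (fst z) (snd z)) p)) by auto. simpl.
  apply S_le; try apply fs_mulr; auto. intros u. apply Rmult_le_compat_l; auto.
  apply rpow_le; auto. split; auto. unfold max_dist; apply Rmax_r. Qed.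

Definition Pm {X Y} (mu : X * Y -> R) : X * Y -> R := prodm (margX mu) (margY mu).

Lemma cpl_Pi {X Y} (pi : (X * Y) * (X * Y) -> R) mu nu : cpl pi mu nu -> cpl (prodc (piX pi) (piY pi)) (Pm mu) (Pm nu).
Proof. intros H. apply cpl_prodc. apply (cpl_piX _ _ _ H). apply (cpl_piY _ _ _ H). Qed.

Lemma cost_Pi {X Y} (dX : X -> X -> R) (dY : Y -> Y -> R) p (pi : (X * Y) * (X * Y) -> R) mu nu :
  0 < p -> (forall x y, 0 <= dX x y) -> (forall x y, 0 <= dY x y) -> fin_prob mu ->
  cpl pi mu nu -> cost (max_dist dX dY) p (prodc (piX pi) (piY pi)) <= 2 * cost (max_dist dX dY) p pi.
Proof. intros Hp HX HY Fm H. eapply Rle_trans. eapply cost_prodc; eauto.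
  apply (cpl_piX _ _ _ H). apply (cpl_piY _ _ _ H). apply fp_push; auto. apply fp_push; auto.
  assert (h1 := cost_piX dX dY p pi mu nu Hp HX H). assert (h2 := cost_piY dX dY p pi mu nu Hp HY H). lra. Qed.

Definition rho {X Y} (pi : (X * Y) * (X * Y) -> R) : (X * Y) * X -> R :=
  push (fun w => (fst w, fst (snd w))) pi.
Definition asc {A B C} (w : A * (B * C)) : (A * B) * C := ((fst w, fst (snd w)), snd (snd w)).
Definition dsc {A B C} (z : (A * B) * C) : A * (B * C) := (fst (fst z), (snd (fst z), snd z)).
Lemma dsc_asc {A B C} (w : A * (B * C)) : dsc (asc w) = w.
Proof. destruct w as [a [b c]]; reflexivity. Qed.
Lemma asc_dsc {A B C} (z : (A * B) * C) : asc (dsc z) = z.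
Proof. destruct z as [[a b] c]; reflexivity. Qed.

Definition kap {X Y} (pi : (X * Y) * (X * Y) -> R) (nu : X * Y -> R) : (X * Y) * (X * Y) -> R :=
  fun w => rho pi (fst (asc w)) * margY nu (snd (asc w)).

Lemma cpl_kap {X Y} (pi : (X * Y) * (X * Y) -> R) mu nu : fin_prob nu -> cpl pi mu nu -> cpl (kap pi nu) mu (Pm nu).
Proof. intros Fn H. assert (Fy := fp_push snd nu Fn). apply fin_prob_iff in Fy. destruct Fy as [y0 [y1 y2]]. change (push snd nu) with (margY nu) in y0, y1, y2.
  destruct (cpl_mu_eq _ _ _ H) as [E1 E2]. destruct H as [h0 [h1 _]].
  assert (fr : fs (rho pi)) by (apply fs_push; auto).
  split. intros; unfold kap; apply Rmult_le_pos. apply push_nonneg; auto. apply y0.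
  split. apply (fs_comp (fun z => rho pi (fst z) * margY nu (snd z)) asc dsc). apply dsc_asc. apply fs_prod; auto.
  split.
  - intros u. unfold kap, asc; simpl.
    assert (E := S_prod (fun x => rho pi (u, x)) (margY nu) (fs_sec1 _ _ fr) y1).
    cbv beta in E. rewrite E, y2, Rmult_1_r. rewrite push_fst by auto. unfold rho. rewrite push_comp by auto.
    rewrite E1. reflexivity.
  - intros v. unfold kap, asc, Pm, prodm; simpl.
    rewrite (S_ext _ (fun a => margY nu (snd v) * rho pi (a, fst v))) by (intros; ring).
    rewrite S_scal, push_snd by auto. unfold rho. rewrite push_comp by auto.
    rewrite E2. unfold margX. rewrite push_comp by auto. rewrite Rmult_comm; reflexivity. Qed.

Definition Mq {X Y} (dY : Y -> Y -> R) p (mu nu : X * Y -> R) : R :=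
  S (fun a => mu a * S (fun b => nu b * rpow (dY (snd a) (snd b)) p)).

Lemma cost_kap {X Y} (dX : X -> X -> R) (dY : Y -> Y -> R) p (pi : (X * Y) * (X * Y) -> R) mu nu :
  0 < p -> (forall x y, 0 <= dX x y) -> (forall x y, 0 <= dY x y) -> fin_prob mu -> fin_prob nu -> cpl pi mu nu ->
  cost (max_dist dX dY) p (kap pi nu) <= cost (max_dist dX dY) p pi + Mq dY p mu nu.
Proof. intros Hp HX HY Fm Fn H. assert (Fy := fp_push snd nu Fn). apply fin_prob_iff in Fy. destruct Fy as [y0 [y1 y2]]. change (push snd nu) with (margY nu) in y0, y1, y2.
  assert (Hf := fin_prob_iff nu). destruct Hf as [Hf _]. destruct (Hf Fn) as [n0 [n1 n2]].
  destruct (cpl_mu_eq _ _ _ H) as [E1 E2]. destruct H as [h0 [h1 [h2 h3]]].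
  assert (fr : fs (rho pi)) by (apply fs_push; auto).
  set (G1 := fun z : ((X * Y) * X) * Y => (rho pi (fst z) * rpow (dX (fst (fst (fst z))) (snd (fst z))) p) * margY nu (snd z)).
  set (G2 := fun z : ((X * Y) * X) * Y => rho pi (fst z) * (margY nu (snd z) * rpow (dY (snd (fst (fst z))) (snd z)) p)).
  assert (fG1 : fs G1) by (exact (fs_prod (fun z => rho pi z * rpow (dX (fst (fst z)) (snd z)) p) (margY nu) (fs_mulr _ _ fr) y1)).
  assert (fG2 : fs G2).
  { apply (fs_ext (fun z => (rho pi (fst z) * margY nu (snd z)) * rpow (dY (snd (fst (fst z))) (snd z)) p)).
    intros; unfold G2; ring. apply fs_mulr. exact (fs_prod (rho pi) (margY nu) fr y1). }
  assert (T1 : S (fun w => G1 (asc w)) <= cost (max_dist dX dY) p pi).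
  { rewrite (S_reindex G1 asc dsc) by (auto; try apply dsc_asc; apply asc_dsc).
    unfold G1. assert (E := S_prod (fun z => rho pi z * rpow (dX (fst (fst z)) (snd z)) p) (margY nu) (fs_mulr _ _ fr) y1).
    cbv beta in E. rewrite E, y2, Rmult_1_r. unfold rho.
    rewrite (push_spec _ pi (fun z => rpow (dX (fst (fst z)) (snd z)) p)) by auto. simpl.
    unfold cost. apply S_le; try apply fs_mulr; auto. intros u. apply Rmult_le_compat_l; auto.
    apply rpow_le; auto. split; auto. unfold max_dist; apply Rmax_l. }
  set (Gm := fun a : X * Y => S (fun y => margY nu y * rpow (dY (snd a) y) p)).
  assert (T2 : S (fun w => G2 (asc w)) = Mq dY p mu nu).
  { rewrite (S_reindex G2 asc dsc) by (auto; try apply dsc_asc; apply asc_dsc).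
    rewrite S_fubini by auto.
    rewrite (S_ext _ (fun z1 => rho pi z1 * Gm (fst z1))) by (intros; unfold G2, Gm; simpl; apply S_scal).
    unfold rho. rewrite (push_spec _ pi (fun z => Gm (fst z))) by auto. simpl.
    rewrite S_fubini by (apply fs_mulr; auto). simpl.
    unfold Mq. apply S_ext; intros a.
    rewrite (S_ext _ (fun b => Gm a * pi (a, b))) by (intros; ring). rewrite S_scal, h2.
    unfold Gm, margY. rewrite (push_spec snd nu (fun y => rpow (dY (snd a) y) p)) by auto. ring. }
  rewrite <- T2. eapply Rle_trans; [|apply Rplus_le_compat_r; apply T1].
  rewrite <- S_plus by (apply (fs_comp _ asc dsc); auto; apply dsc_asc).
  unfold cost. apply S_le.
  - apply fs_mulr. apply (fs_comp (fun z => rho pi (fst z) * margY nu (snd z)) asc dsc). apply dsc_asc. apply fs_prod; auto.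
  - apply fs_plus; apply (fs_comp _ asc dsc); auto; apply dsc_asc.
  - intros w. unfold G1, G2, kap, max_dist, asc; simpl.
    assert (h := rpow_max (dX (fst (fst w)) (fst (snd w))) (dY (snd (fst w)) (snd (snd w))) p).
    assert (0 <= rho pi (fst w, fst (snd w)) * margY nu (snd (snd w))) by (apply Rmult_le_pos; auto; apply push_nonneg; auto).
    apply Rle_trans with (rho pi (fst w, fst (snd w)) * margY nu (snd (snd w)) *
      (rpow (dX (fst (fst w)) (fst (snd w))) p + rpow (dY (snd (fst w)) (snd (snd w))) p)).
    apply Rmult_le_compat_l; auto. right; ring.
Qed.

Lemma Mq_sym {X Y} (dY : Y -> Y -> R) p (mu nu : X * Y -> R) : (forall x y, dY x y = dY y x) -> fs mu -> fs nu ->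
  Mq dY p mu nu = Mq dY p nu mu.
Proof. intros Hs Hm Hn. unfold Mq.
  set (h := fun w : (X * Y) * (X * Y) => mu (fst w) * (nu (snd w) * rpow (dY (snd (fst w)) (snd (snd w))) p)).
  assert (fh : fs h).
  { apply (fs_ext (fun w => (mu (fst w) * nu (snd w)) * rpow (dY (snd (fst w)) (snd (snd w))) p)).
    intros; unfold h; ring. apply fs_mulr, fs_prod; auto. }
  rewrite (S_ext _ (fun a => S (fun b => h (a, b)))) by (intros; unfold h; simpl; symmetry; apply S_scal).
  rewrite (S_swap h fh). apply S_ext; intros b. unfold h; simpl. rewrite <- S_scal.
  apply S_ext; intros a. rewrite Hs; ring. Qed.

Lemma Mq_bound {X Y} (dX : X -> X -> R) (dY : Y -> Y -> R) p (pi : (X * Y) * (X * Y) -> R) mu nu D :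
  0 < p -> (forall x y, 0 <= dX x y) -> (forall x y, 0 <= dY x y) ->
  (forall x y z, dY x z <= dY x y + dY y z) ->
  fin_prob mu -> fin_prob nu -> cpl pi mu nu -> 0 <= D ->
  (forall u v, 0 < nu u -> 0 < nu v -> max_dist dX dY u v <= D) ->
  Mq dY p mu nu <= rpow 2 p * (cost (max_dist dX dY) p pi + rpow D p).
Proof. intros Hp HX HY Ht Fm Fn H HD HDb.
  assert (SP : S pi = 1). { rewrite (S_cpl _ _ _ H). apply fin_prob_iff in Fm; tauto. }
  apply fin_prob_iff in Fn. destruct Fn as [n0 [n1 n2]].
  destruct H as [h0 [h1 [h2 h3]]].
  set (Gn := fun a : X * Y => S (fun b => nu b * rpow (dY (snd a) (snd b)) p)).
  set (K := fun u : (X * Y) * (X * Y) => rpow 2 p * (rpow (max_dist dX dY (fst u) (snd u)) p + rpow D p)).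
  assert (E : Mq dY p mu nu = S (fun u => pi u * Gn (fst u))).
  { rewrite S_fubini by (apply fs_mulr; auto). unfold Mq. apply S_ext; intros a. simpl.
    rewrite <- h2. rewrite Rmult_comm, <- S_scal. apply S_ext; intros; unfold Gn; ring. }
  rewrite E. apply Rle_trans with (S (fun u => pi u * K u)).
  - apply S_le; try apply fs_mulr; auto. intros u.
    destruct (Req_dec (pi u) 0) as [Z|Z]. rewrite Z; lra.
    assert (Pu : 0 < pi u) by (specialize (h0 u); lra).
    assert (Nu : 0 < nu (snd u)).
    { rewrite <- h3. eapply Rlt_le_trans; [|apply (S_ge_term (fun a => pi (a, snd u)) (fst u))].
      rewrite <- surjective_pairing; auto. intros; apply h0. apply fs_sec2; auto. }
    apply Rmult_le_compat_l; [lra|]. unfold Gn.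
    rewrite <- (Rmult_1_r (K u)), <- n2, <- S_scal.
    apply S_le. apply fs_mulr; auto. apply fs_mul; auto. intros b.
    destruct (Req_dec (nu b) 0) as [Zb|Zb]. rewrite Zb; lra.
    assert (Nb : 0 < nu b) by (specialize (n0 b); lra).
    rewrite Rmult_comm. apply Rmult_le_compat_r; [lra|]. unfold K.
    assert (md : 0 <= max_dist dX dY (fst u) (snd u)) by (unfold max_dist; apply Rmax_case; auto).
    eapply Rle_trans; [|apply rpow_add; auto].
    apply rpow_le; auto. split; auto.
    eapply Rle_trans. apply (Ht _ (snd (snd u))). apply Rplus_le_compat.
    unfold max_dist; apply Rmax_r.
    eapply Rle_trans; [|apply (HDb (snd u) b Nu Nb)]. unfold max_dist; apply Rmax_r.
  - unfold K. rewrite (S_ext _ (fun u => rpow 2 p * (pi u * rpow (max_dist dX dY (fst u) (snd u)) p) + (rpow 2 p * rpow D p) * pi u))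
      by (intros; ring).
    rewrite S_plus, !S_scal, SP. unfold cost; lra. apply fs_mul, fs_mulr; auto. apply fs_mul; auto.
Qed.

Lemma le1 a K : 0 <= K -> a <= 1 -> a * K <= K.
Proof. intros; nra. Qed.

Definition Hm {X Y} (t : R) (mu : X * Y -> R) : X * Y -> R := mix t mu (Pm mu).

Lemma fp_Pm {X Y} (mu : X * Y -> R) : fin_prob mu -> fin_prob (Pm mu).
Proof. intros; apply fp_prodm; apply fp_push; auto. Qed.

Lemma cpl_fs {A B} (pi : A * B -> R) mu nu : cpl pi mu nu -> fs pi.
Proof. intros [_ [h _]]; auto. Qed.

Lemma hom_cpl {X Y} (dX : X -> X -> R) (dY : Y -> Y -> R) p (pi : (X * Y) * (X * Y) -> R) mu mu' D t s :
  is_metric dX -> is_metric dY -> 0 < p ->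
  fin_prob mu -> fin_prob mu' -> cpl pi mu mu' -> 0 <= D ->
  (forall u v, 0 < mu u -> 0 < mu v -> max_dist dX dY u v <= D) ->
  0 <= t <= 1 -> 0 <= s <= 1 ->
  exists G, cpl G (Hm t mu) (Hm s mu') /\
    cost (max_dist dX dY) p G <= (3 + rpow 2 p) * cost (max_dist dX dY) p pi + Rabs (t - s) * (rpow 2 p * rpow D p).
Proof. intros [X0 [_ [Xs _]]] [Y0 [_ [Ys Yt]]] Hp Fm Fm' H HD HDb Ht Hs.
  set (d := max_dist dX dY).
  assert (ds : forall x y, d x y = d y x) by (intros; unfold d, max_dist; rewrite Xs, Ys; auto).
  set (c := cost d p pi). assert (c0 : 0 <= c) by (eapply cost_nonneg; eauto).
  set (C2 := rpow 2 p). assert (C20 : 0 <= C2) by apply rpow_nonneg.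
  set (Dp := rpow D p). assert (Dp0 : 0 <= Dp) by apply rpow_nonneg.
  set (Pi := prodc (piX pi) (piY pi)).
  assert (HPi : cpl Pi (Pm mu) (Pm mu')) by (apply cpl_Pi; auto).
  assert (cPi : cost d p Pi <= 2 * c) by (apply (cost_Pi dX dY p pi mu mu'); auto).
  assert (Ht' := cpl_tp _ _ _ H).
  assert (ctp : cost d p (tp pi) = c) by (apply cost_tp; auto; eapply cpl_fs; eauto).
  assert (MB : Mq dY p mu' mu <= C2 * (c + Dp)).
  { rewrite <- ctp. apply (Mq_bound dX dY p (tp pi) mu' mu D); auto. }
  destruct (Rle_lt_dec t s) as [ts|ts].
  - set (k := kap pi mu').
    assert (Hk : cpl k mu (Pm mu')) by (apply cpl_kap; auto).
    assert (ck : cost d p k <= c + C2 * (c + Dp)).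
    { eapply Rle_trans. apply (cost_kap dX dY p pi mu mu'); auto.
      rewrite Mq_sym; auto. unfold c, C2, Dp, d in *; lra. apply fin_prob_iff in Fm; tauto. apply fin_prob_iff in Fm'; tauto. }
    exists (fun u => (1 - s) * pi u + (s - t) * k u + t * Pi u). split.
    + apply (cpl_mix3 pi k Pi mu mu (Pm mu) mu' (Pm mu') (Pm mu')); auto; try lra.
      intros; unfold Hm, mix; ring. intros; unfold Hm, mix; ring.
    + rewrite cost_mix3 by (eapply cpl_fs; eauto). fold c.
      rewrite Rabs_minus_sym, Rabs_right by lra.
      assert (ck0 : 0 <= cost d p k) by (eapply cost_nonneg; eauto).
      assert (cP0 : 0 <= cost d p Pi) by (eapply cost_nonneg; eauto).
      set (K := C2 * c). assert (K0 : 0 <= K) by (apply Rmult_le_pos; auto).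
      set (E := C2 * Dp). assert (E0 : 0 <= E) by (apply Rmult_le_pos; auto).
      assert (ck' : cost d p k <= c + K + E) by (unfold K, E; nra).
      assert (Q1 : (s - t) * cost d p k <= (s - t) * (c + K + E)) by (apply Rmult_le_compat_l; lra).
      assert (Q2 : t * cost d p Pi <= t * (2 * c)) by (apply Rmult_le_compat_l; lra).
      assert (Q3 : (s - t) * K <= K) by (apply le1; lra). assert (Q4 : (s - t) * c <= c) by (apply le1; lra).
      assert (Q5 : (1 - s) * c <= c) by (apply le1; lra). assert (Q6 : t * c <= c) by (apply le1; lra).
      replace ((3 + C2) * c) with (3 * c + K) by (unfold K; ring). unfold E in *. nra.
  - set (k := kap (tp pi) mu).
    assert (Hk : cpl k mu' (Pm mu)) by (apply cpl_kap; auto).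
    assert (ck : cost d p k <= c + C2 * (c + Dp)).
    { eapply Rle_trans. apply (cost_kap dX dY p (tp pi) mu' mu); auto. unfold c, C2, Dp, d in *; lra. }
    assert (Hk' := cpl_tp _ _ _ Hk).
    assert (ck' : cost d p (tp k) = cost d p k) by (apply cost_tp; auto; eapply cpl_fs; eauto).
    exists (fun u => (1 - t) * pi u + (t - s) * tp k u + s * Pi u). split.
    + apply (cpl_mix3 pi (tp k) Pi mu (Pm mu) (Pm mu) mu' mu' (Pm mu')); auto; try lra.
      intros; unfold Hm, mix; ring. intros; unfold Hm, mix; ring.
    + rewrite cost_mix3 by (eapply cpl_fs; eauto). fold c. rewrite ck'.
      rewrite Rabs_right by lra.
      assert (ck0 : 0 <= cost d p k) by (eapply cost_nonneg; eauto).
      assert (cP0 : 0 <= cost d p Pi) by (eapply cost_nonneg; eauto).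
      set (K := C2 * c). assert (K0 : 0 <= K) by (apply Rmult_le_pos; auto).
      set (E := C2 * Dp). assert (E0 : 0 <= E) by (apply Rmult_le_pos; auto).
      assert (ck'' : cost d p k <= c + K + E) by (unfold K, E; nra).
      assert (Q1 : (t - s) * cost d p k <= (t - s) * (c + K + E)) by (apply Rmult_le_compat_l; lra).
      assert (Q2 : s * cost d p Pi <= s * (2 * c)) by (apply Rmult_le_compat_l; lra).
      assert (Q3 : (t - s) * K <= K) by (apply le1; lra). assert (Q4 : (t - s) * c <= c) by (apply le1; lra).
      assert (Q5 : (1 - t) * c <= c) by (apply le1; lra). assert (Q6 : s * c <= c) by (apply le1; lra).
      replace ((3 + C2) * c) with (3 * c + K) by (unfold K; ring). unfold E in *. nra.
Qed.

Lemma sig_eq {T} (P : T -> Prop) (a b : {x | P x}) : proj1_sig a = proj1_sig b -> a = b.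
Proof. destruct a as [a Ha], b as [b Hb]; simpl; intros ->. f_equal; apply proof_irrelevance. Qed.

Definition downK {T} (K : (T -> Prop) -> Prop) := forall S S', K S -> (forall x, S' x -> S x) -> K S'.

Definition clamp (t : R) := Rmax 0 (Rmin 1 t).
Lemma clamp_rng t : 0 <= clamp t <= 1.
Proof. unfold clamp. split. apply Rmax_l. apply Rmax_lub. lra. apply Rmin_l. Qed.
Lemma clamp_id t : 0 <= t <= 1 -> clamp t = t.
Proof. intros; unfold clamp. rewrite Rmin_right by lra. rewrite Rmax_right; lra. Qed.

Lemma fp_nonneg {T} (mu : T -> R) : fin_prob mu -> forall x, 0 <= mu x.
Proof. intros [H _]; auto. Qed.


Lemma generic {X Y} (dX : X -> X -> R) (dY : Y -> Y -> R) p
  (KXY : (X * Y -> Prop) -> Prop) (KX : (X -> Prop) -> Prop) (KY : (Y -> Prop) -> Prop) :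
  1 <= p -> is_metric dX -> is_metric dY ->
  downK KXY -> downK KX -> downK KY ->
  (forall S, KXY S -> KX (fun x => exists u, S u /\ fst u = x)) ->
  (forall S, KXY S -> KY (fun y => exists u, S u /\ snd u = y)) ->
  (forall A B, KX A -> KY B -> KXY (fun u => A (fst u) /\ B (snd u))) ->
  (forall S, KXY S -> KXY (fun u => (exists w, S w /\ fst w = fst u) /\ (exists w, S w /\ snd w = snd u))) ->
  homotopy_equivalent (thick_dist (max_dist dX dY) p KXY)
    (max_dist (thick_dist dX p KX) (thick_dist dY p KY)).
Proof.
  intros Hp1 MX MY dK dKX dKY pX pY pP pB.
  assert (Hp : 0 < p) by lra.
  assert (MX' := MX). assert (MY' := MY).
  destruct MX as [X0 [_ [Xs Xt]]], MY as [Y0 [_ [Ys Yt]]].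
  set (d := max_dist dX dY).
  assert (d0 : forall x y, 0 <= d x y) by (intros; unfold d, max_dist; apply Rmax_case; auto).
  assert (fX : forall m : Thick (X * Y) KXY, fin_prob (margX (proj1_sig m)) /\ KX (supp (margX (proj1_sig m)))).
  { intros [m [Fm Km]]; simpl. split. apply fp_push; auto.
    apply (dKX _ _ (pX _ Km)). intros x Hx. apply supp_push in Hx; auto. apply fp_nonneg; auto. }
  assert (fY : forall m : Thick (X * Y) KXY, fin_prob (margY (proj1_sig m)) /\ KY (supp (margY (proj1_sig m)))).
  { intros [m [Fm Km]]; simpl. split. apply fp_push; auto.
    apply (dKY _ _ (pY _ Km)). intros x Hx. apply supp_push in Hx; auto. apply fp_nonneg; auto. }
  set (f := fun m : Thick (X * Y) KXY =>
    (exist _ (margX (proj1_sig m)) (fX m) : Thick X KX, exist _ (margY (proj1_sig m)) (fY m) : Thick Y KY)).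
  assert (gP : forall y : Thick X KX * Thick Y KY, fin_prob (prodm (proj1_sig (fst y)) (proj1_sig (snd y))) /\
      KXY (supp (prodm (proj1_sig (fst y)) (proj1_sig (snd y))))).
  { intros [[a [Fa Ka]] [b [Fb Kb]]]; simpl. split. apply fp_prodm; auto.
    apply (dK _ _ (pP _ _ Ka Kb)). intros u Hu. apply supp_prodm in Hu; auto; apply fp_nonneg; auto. }
  set (g := fun y : Thick X KX * Thick Y KY => exist _ (prodm (proj1_sig (fst y)) (proj1_sig (snd y))) (gP y)
     : Thick (X * Y) KXY).
  assert (hP : forall t (m : Thick (X * Y) KXY), fin_prob (Hm (clamp t) (proj1_sig m)) /\ KXY (supp (Hm (clamp t) (proj1_sig m)))).
  { intros t [m [Fm Km]]; simpl. split. apply fp_mix; auto. apply clamp_rng. apply fp_Pm; auto.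
    apply (dK _ _ (pB _ Km)). intros u Hu. apply supp_mix in Hu; try apply fp_nonneg; auto.
    2: apply fp_Pm; auto.
    destruct Hu as [Hu|Hu]. split; exists u; auto.
    unfold Pm in Hu. apply supp_prodm in Hu; try (apply fp_nonneg, fp_push; auto).
    destruct Hu as [H1 H2]. apply supp_push in H1; [|apply fp_nonneg; auto].
    apply supp_push in H2; [|apply fp_nonneg; auto]. split; auto. }
  set (H := fun t (m : Thick (X * Y) KXY) => exist _ (Hm (clamp (1 - t)) (proj1_sig m)) (hP (1 - t) m)
     : Thick (X * Y) KXY).
  exists f, g. split; [|split; [|split]].
  -
    intros [m [Fm Km]] eps He.
    destruct (W_of_cost dX p Hp eps He) as [E1 [E10 HE1]].
    destruct (W_of_cost dY p Hp eps He) as [E2 [E20 HE2]].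
    destruct (cost_of_W d p Hp (Rmin E1 E2) (Rmin_pos _ _ E10 E20)) as [de [de0 Hde]].
    exists de; split; auto. intros [m' [Fm' Km']] Hd. unfold thick_dist in Hd; simpl in Hd.
    destruct (Hde m m' Fm Fm' Hd) as [pi [Hpi Hc]].
    unfold f, max_dist, thick_dist; simpl. apply Rmax_lub_lt.
    + apply (HE1 (piX pi)). apply (cpl_piX _ _ _ Hpi).
      eapply Rle_lt_trans. apply (cost_piX dX dY p pi m m'); auto. eapply Rlt_le_trans; [apply Hc|apply Rmin_l].
    + apply (HE2 (piY pi)). apply (cpl_piY _ _ _ Hpi).
      eapply Rle_lt_trans. apply (cost_piY dX dY p pi m m'); auto. eapply Rlt_le_trans; [apply Hc|apply Rmin_r].
  -
    intros [[a [Fa Ka]] [b [Fb Kb]]] eps He.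
    destruct (W_of_cost d p Hp eps He) as [E [E0 HE]].
    destruct (cost_of_W dX p Hp (E / 2)) as [d1 [d10 Hd1]]. lra.
    destruct (cost_of_W dY p Hp (E / 2)) as [d2 [d20 Hd2]]. lra.
    exists (Rmin d1 d2); split. apply Rmin_pos; auto.
    intros [[a' [Fa' Ka']] [b' [Fb' Kb']]] Hd. unfold max_dist at 1, thick_dist in Hd; simpl in Hd.
    assert (Ha : Wp dX p a a' < d1). { eapply Rle_lt_trans. apply Rmax_l. eapply Rlt_le_trans. apply Hd. apply Rmin_l. }
    assert (Hb : Wp dY p b b' < d2). { eapply Rle_lt_trans. apply Rmax_r. eapply Rlt_le_trans. apply Hd. apply Rmin_r. }
    destruct (Hd1 a a' Fa Fa' Ha) as [pA [HA cA]]. destruct (Hd2 b b' Fb Fb' Hb) as [pB' [HB cB]].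
    unfold g, thick_dist; simpl. apply (HE (prodc pA pB')). apply cpl_prodc; auto.
    eapply Rle_lt_trans. apply (cost_prodc dX dY p pA pB' a a' b b'); auto. lra.
  -
    exists H. split; [|split].
    + intros t [m [Fm Km]] eps Ht He.
      destruct (W_of_cost d p Hp eps He) as [E [E0 HE]].
      destruct (diam_bound d m d0) as [D [D0 HD]]. apply fin_prob_iff in Fm; tauto.
      set (C := 3 + rpow 2 p). assert (C0 : 0 < C) by (unfold C; assert (h := rpow_nonneg 2 p); lra).
      set (B := rpow 2 p * rpow D p). assert (B0 : 0 <= B) by (unfold B; apply Rmult_le_pos; apply rpow_nonneg).
      destruct (cost_of_W d p Hp (E / (2 * C))) as [d1 [d10 Hd1]]. apply Rdiv_lt_0_compat; lra.
      set (d2 := E / (2 * (B + 1))). assert (d20 : 0 < d2) by (unfold d2; apply Rdiv_lt_0_compat; lra).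
      exists (Rmin d1 d2); split. apply Rmin_pos; auto.
      intros s [m' [Fm' Km']] Hs Hts Hd. unfold thick_dist in Hd |- *; simpl in Hd |- *.
      destruct (Hd1 m m' Fm Fm') as [pi [Hpi Hc]]. eapply Rlt_le_trans; [apply Hd|apply Rmin_l].
      rewrite !clamp_id by lra.
      destruct (hom_cpl dX dY p pi m m' D (1 - t) (1 - s) MX' MY' Hp Fm Fm' Hpi D0 HD) as [G [HG cG]]; try lra.
      apply (HE G _ _ HG). eapply Rle_lt_trans. apply cG. fold d C B.
      replace (1 - t - (1 - s)) with (- (t - s)) by ring. rewrite Rabs_Ropp.
      assert (h1 : C * cost d p pi < E / 2).
      { replace (E / 2) with (C * (E / (2 * C))) by (field; lra). apply Rmult_lt_compat_l; auto. }
      assert (h2 : Rabs (t - s) * B <= d2 * B).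
      { apply Rmult_le_compat_r; auto. left; eapply Rlt_le_trans; [apply Hts|apply Rmin_r]. }
      assert (h3 : d2 * B < E / 2).
      { unfold d2. apply Rmult_lt_reg_r with (2 * (B + 1)). lra.
        replace (E / (2 * (B + 1)) * B * (2 * (B + 1))) with (E * B) by (field; lra).
        replace (E / 2 * (2 * (B + 1))) with (E * B + E) by (field; lra). lra. }
      lra.
    + intros m. apply sig_eq. unfold H; simpl. rewrite clamp_id by lra.
      apply functional_extensionality; intros u. unfold Hm, mix, Pm, g, f; simpl. ring.
    + intros m. apply sig_eq. unfold H; simpl. rewrite clamp_id by lra.
      apply functional_extensionality; intros u. unfold Hm, mix; ring.
  -
    exists (fun (_ : R) y => y). split; [|split].
    + intros t y eps Ht He. exists eps; split; auto.
    + intros [[a [Fa Ka]] [b [Fb Kb]]]. unfold f, g; simpl. f_equal; apply sig_eq; simpl.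
      symmetry; apply margX_prodm; auto. symmetry; apply margY_prodm; auto.
    + auto.
Qed.

Lemma ib_mono (c : bool) (a b : R) (r : Rbar) : a <= b ->
  (if c then Rbar_le b r else Rbar_lt b r) -> (if c then Rbar_le a r else Rbar_lt a r).
Proof. intros H; destruct c; intros H'. eapply Rbar_le_trans; [|apply H']; apply H; auto.
  eapply Rbar_le_lt_trans; [|apply H']; apply H; auto. Qed.

Lemma ib_max (c : bool) (a b : R) (r : Rbar) :
  (if c then Rbar_le a r else Rbar_lt a r) -> (if c then Rbar_le b r else Rbar_lt b r) ->
  (if c then Rbar_le (Rmax a b) r else Rbar_lt (Rmax a b) r).
Proof. intros; apply Rmax_case; auto. Qed.

Lemma VR_props {X Y} (dX : X -> X -> R) (dY : Y -> Y -> R) r :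
  downK (VR (max_dist dX dY) r) /\ downK (VR dX r) /\ downK (VR dY r) /\
  (forall S, VR (max_dist dX dY) r S -> VR dX r (fun x => exists u, S u /\ fst u = x)) /\
  (forall S, VR (max_dist dX dY) r S -> VR dY r (fun y => exists u, S u /\ snd u = y)) /\
  (forall A B, VR dX r A -> VR dY r B -> VR (max_dist dX dY) r (fun u => A (fst u) /\ B (snd u))) /\
  (forall S, VR (max_dist dX dY) r S -> VR (max_dist dX dY) r
     (fun u => (exists w, S w /\ fst w = fst u) /\ (exists w, S w /\ snd w = snd u))).
Proof. unfold downK, VR. split; [|split; [|split; [|split; [|split; [|split]]]]].
  - intros Sx Sx' H HS x y Hx Hy; auto.
  - intros Sx Sx' H HS x y Hx Hy; auto.
  - intros Sx Sx' H HS x y Hx Hy; auto.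
  - intros Sx H x y [u [Hu <-]] [v [Hv <-]]. apply (ib_mono true _ (max_dist dX dY u v)).
    apply Rmax_l. apply H; auto.
  - intros Sx H x y [u [Hu <-]] [v [Hv <-]]. apply (ib_mono true _ (max_dist dX dY u v)).
    apply Rmax_r. apply H; auto.
  - intros A B HA HB u v [H1 H2] [H3 H4]. apply (ib_max true); auto.
  - intros Sx H u v [[w1 [H1 E1]] [w2 [H2 E2]]] [[w3 [H3 E3]] [w4 [H4 E4]]].
    apply (ib_max true).
    + rewrite <- E1, <- E3. apply (ib_mono true _ (max_dist dX dY w1 w3)). apply Rmax_l. apply H; auto.
    + rewrite <- E2, <- E4. apply (ib_mono true _ (max_dist dX dY w2 w4)). apply Rmax_r. apply H; auto.
Qed.

Lemma Cech_props {X Y} (c : bool) (dX : X -> X -> R) (dY : Y -> Y -> R) r :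
  downK (Cech c (max_dist dX dY) r) /\ downK (Cech c dX r) /\ downK (Cech c dY r) /\
  (forall Sx, Cech c (max_dist dX dY) r Sx -> Cech c dX r (fun x => exists u, Sx u /\ fst u = x)) /\
  (forall Sx, Cech c (max_dist dX dY) r Sx -> Cech c dY r (fun y => exists u, Sx u /\ snd u = y)) /\
  (forall A B, Cech c dX r A -> Cech c dY r B -> Cech c (max_dist dX dY) r (fun u => A (fst u) /\ B (snd u))) /\
  (forall Sx, Cech c (max_dist dX dY) r Sx -> Cech c (max_dist dX dY) r
     (fun u => (exists w, Sx w /\ fst w = fst u) /\ (exists w, Sx w /\ snd w = snd u))).
Proof. unfold downK, Cech, in_ball. split; [|split; [|split; [|split; [|split; [|split]]]]].
  - intros Sx Sx' [z H] HS; exists z; intros x Hx; apply H, HS, Hx.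
  - intros Sx Sx' [z H] HS; exists z; intros x Hx; apply H, HS, Hx.
  - intros Sx Sx' [z H] HS; exists z; intros x Hx; apply H, HS, Hx.
  - intros Sx [z H]. exists (fst z). intros x [u [Hu <-]].
    apply (ib_mono c _ (max_dist dX dY u z)). apply Rmax_l. apply H; auto.
  - intros Sx [z H]. exists (snd z). intros x [u [Hu <-]].
    apply (ib_mono c _ (max_dist dX dY u z)). apply Rmax_r. apply H; auto.
  - intros A B [za HA] [zb HB]. exists (za, zb). intros u [H1 H2]. apply ib_max; [apply HA|apply HB]; auto.
  - intros Sx [z H]. exists z. intros u [[w1 [H1 E1]] [w2 [H2 E2]]]. apply ib_max.
    + rewrite <- E1. apply (ib_mono c _ (max_dist dX dY w1 z)). apply Rmax_l. apply H; auto.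
    + rewrite <- E2. apply (ib_mono c _ (max_dist dX dY w2 z)). apply Rmax_r. apply H; auto.
Qed.

Theorem corollary5p2 (p : R) (r : Rbar) (closed : bool)
  (X Y : Type) (dX : X -> X -> R) (dY : Y -> Y -> R) :
  1 <= p -> Rbar_le (Finite 0) r ->
  is_metric dX -> is_metric dY ->
  homotopy_equivalent
    (thick_dist (max_dist dX dY) p (VR (max_dist dX dY) r))
    (max_dist (thick_dist dX p (VR dX r)) (thick_dist dY p (VR dY r)))
  /\
  homotopy_equivalent
    (thick_dist (max_dist dX dY) p (Cech closed (max_dist dX dY) r))
    (max_dist (thick_dist dX p (Cech closed dX r))
              (thick_dist dY p (Cech closed dY r))).
Proof.
  intros Hp _ MX MY. split.
  - destruct (VR_props dX dY r) as [a [b [c [d [e [f g]]]]]]. apply generic; auto.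
  - destruct (Cech_props closed dX dY r) as [a [b [c [d [e [f g]]]]]]. apply generic; auto.
Qed.
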